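(* If $[\gamma]\in J_1$ and $e([\gamma])=0$, then there exists $f\in F^\times$ with $[\gamma]=[f]$ in $J$.
   Context: $p$ odd prime; $F$ a field containing a primitive $p$th root of unity $\xi_p$; $K=F(\sqrt[p]{a})$, $a\in F^\times$, cyclic of degree $p$; $G=\mathrm{Gal}(K/F)=\langle\sigma\rangle$ with $\sigma(\sqrt[p]{a})=\xi_p\sqrt[p]{a}$; $\rho=\sigma-1$. $J=K^\times/K^{\times p}$ as a multiplicative $\mathbb{F}_p[G]$-module, $[\gamma]$ the class of $\gamma$; $J_i=\ker(\rho^i)$. For $[\gamma]\in J_{p-1}$, the index $e([\gamma])\in\mathbb{F}_p$ is defined by $\xi_p^{e([\gamma])}=\sigma(\delta)/\delta$ where $\delta\in K$ is any $p$th root of $N_{K/F}(\gamma)$ (which lies in $K$). *)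

(* Defs.v *)
From HB Require Import structures.
From mathcomp Require Import all_boot all_order all_algebra all_fingroup all_field.
Set Implicit Arguments. Unset Strict Implicit. Unset Printing Implicit Defensive.
Import GRing.Theory.
Local Open Scope ring_scope.

(* Setting: K/F a splitting field extension (K = F(a^(1/p)), cyclic of degree p),
   sigma : gal_of {:K} a generator of Gal(K/F).
   J = K^x / K^x^p; elements of K^x are nonzero gamma : K, [gamma] its class. *)

Section Defs.
Variables (F : fieldType) (K : splittingFieldType F).

Definition Jeq (p : nat) (x y : K) : Prop :=
  exists k : K, k != 0 /\ x = y * k ^+ p.

(* [gamma] \in J_1 = ker(rho), rho = sigma - 1 :  [sigma gamma / gamma] = 1 in J,
   i.e. [sigma gamma] = [gamma]. *)
Definition in_J1 (p : nat) (sigma : gal_of {:K}) (gamma : K) : Prop :=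
  Jeq p (sigma gamma) gamma.

Definition normKF (gamma : K) : K := galNorm 1 {:K} gamma.

(* e([gamma]) = e  (e taken as a natural number representing an element of F_p):
   xi^e = sigma(delta)/delta for a p-th root delta in K of N_{K/F}(gamma). *)
Definition index_is (p : nat) (xi : F) (sigma : gal_of {:K}) (gamma : K) (e : nat)
  : Prop :=
  exists delta : K, delta != 0 /\ delta ^+ p = normKF gamma /\
                    sigma delta = (xi ^+ e)%:A * delta.
End Defs.

(* Main.v *)
Require Import Defs.
From HB Require Import structures.
From mathcomp Require Import all_boot all_order all_algebra all_fingroup all_field.
From mathcomp Require Import cyclic.
Import GRing.Theory.
Local Open Scope ring_scope.

Lemma prod_cycle (gT : finGroupType) (R : comNzRingType) (s : gT) (G : gT -> R) :
  \prod_(y in <[s]>%g) G y = \prod_(i < #[s]%g) G (s ^+ i)%g.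
Proof.
have -> : <[s]>%g = [set (s ^+ (val i))%g | i : 'I_#[s]%g].
  apply/setP=> y; apply/idP/imsetP.
    by case/cyclePmin=> i lti ->; exists (Ordinal lti).
  by case=> i _ ->; apply: mem_cycle.
rewrite big_imset //=.
move=> i j _ _ /eqP; rewrite eq_expg_ord //.
by move/eqP.
Qed.

Theorem lemma4 (F : fieldType) (K : splittingFieldType F) (p : nat)
  (xi : F) (a : F) (alpha : K) (sigma : gal_of {:K}) (gamma : K) :
  prime p -> odd p ->
  p.-primitive_root xi ->
  a != 0 ->
  alpha ^+ p = a%:A ->
  <<1; alpha>>%VS = fullv ->
  \dim {:K} = p ->
  sigma \in 'Gal({:K} / 1)%g ->
  sigma alpha = xi%:A * alpha ->
  gamma != 0 ->
  in_J1 p sigma gamma ->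
  index_is p xi sigma gamma 0 ->
  exists f : F, f != 0 /\ Jeq p gamma f%:A.
Proof.
move=> pr_p odd_p prim_xi a0 alpha_p adj dimK gal_s s_alpha g0 [k [k0 sg]]
  [d [d0 [dp sd]]].
have p_gt1 := prime_gt1 pr_p.
have xi1 : xi != 1.
  apply: contraTneq p_gt1 => xi1.
  have := prim_order_dvd prim_xi 1; rewrite expr1 xi1 eqxx dvdn1 => /eqP ->.
  by [].
have alpha0 : alpha != 0.
  apply: contraNneq a0 => al0.
  have : (a%:A : K) = 0.
    by rewrite -alpha_p al0 expr0n /= gtn_eqF // prime_gt0.
  by move/eqP; rewrite scaler_eq0 oner_eq0 orbF.
set G := <[sigma]>%g.
have K0_1 : fixedField G = 1%VS.
  have sub : (1 <= fixedField G)%VS := sub1v _.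
  have := field_dimS (subvf (fixedField G)); rewrite dimK.
  case/primeP: pr_p => _ /[apply] /orP [] /eqP dK0.
    by apply/eqP; rewrite eq_sym eqEdim sub dimv1 dK0.
  exfalso.
  have eK : fixedField G = fullv.
    by apply/eqP; rewrite eqEdim subvf dimK -dK0 /=; apply: leqnn.
  have := memvf alpha; rewrite -eK => /mem_fixedFieldP [_ /(_ sigma (cycle_id _))].
  rewrite s_alpha => h.
  have : (xi%:A - 1) * alpha = 0 by rewrite mulrBl h mul1r subrr.
  move/eqP; rewrite mulf_eq0 (negbTE alpha0) orbF subr_eq0 => /eqP h2.
  have : (xi - 1) *: (1:K) == 0 by rewrite scalerBl scale1r h2 subrr.
  by rewrite scaler_eq0 oner_eq0 orbF subr_eq0 (negbTE xi1).
have galG : 'Gal({:K} / 1)%g = G.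
  rewrite -[RHS]genGid -gal_generated; congr ('Gal(_ / _))%g.
  exact: esym K0_1.
have ord : #[sigma]%g = p.
  have := galois_dim (fixedField_galois G).
  have dK0 : \dim (fixedField G) = 1%N by rewrite K0_1 dimv1.
  by rewrite gal_generated genGid -orderE dK0 divn1 dimK.
have normE x : normKF x = \prod_(i < p) (sigma ^+ i)%g x.
  by rewrite /normKF /galNorm galG prod_cycle ord.
have sX i x : (sigma ^+ i.+1)%g x = sigma ((sigma ^+ i)%g x).
  by rewrite expgSr galM ?memvf.
pose P i := \prod_(j < i) (sigma ^+ j)%g k.
have PS i : P i.+1 = k * sigma (P i).
  rewrite /P big_ord_recl expg0 gal_id rmorph_prod; congr (_ * _).
  by apply: eq_bigr => j _; rewrite /= sX.
have P0 : P 0 = 1 by rewrite /P big_ord0.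
have Pn0 i : P i != 0.
  by elim: i => [|i IH]; rewrite ?P0 ?oner_neq0 // PS mulf_neq0 // fmorph_eq0.
have sgi i : (sigma ^+ i)%g gamma = gamma * P i ^+ p.
  elim: i => [|i IH]; first by rewrite expg0 gal_id P0 expr1n mulr1.
  rewrite sX IH rmorphM rmorphXn.
  change (sigma gamma * sigma (P i) ^+ p = gamma * P i.+1 ^+ p).
  by rewrite sg PS exprMn mulrA.
pose d' := gamma * \prod_(i < p) P i.
have d'p : d' ^+ p = normKF gamma.
  rewrite normE; under eq_bigr do rewrite sgi.
  by rewrite big_split prodr_const card_ord prodrXl exprMn.
have sd' : sigma d' = d' * P p.
  rewrite rmorphM rmorph_prod.
  change (sigma gamma * \prod_(i < p) sigma (P i) = d' * P p).
  rewrite sg -mulrA /d' -mulrA; congr (_ * _).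
  rewrite -[X in k ^+ X](card_ord p) -prodr_const -big_split /=.
  under eq_bigr do rewrite -PS.
  have -> : \prod_(i < p) P i * P p = \prod_(i < p.+1) P i by rewrite big_ord_recr.
  by rewrite big_ord_recl P0 mul1r.
have d'0 : d' != 0.
  rewrite mulf_neq0 // prodf_seq_neq0; apply/allP => i _ /=; exact: Pn0.
have Pp1 : P p = 1.
  pose c := d' / d.
  have cp : c ^+ p = 1 by rewrite expr_div_n d'p -dp divff // expf_neq0.
  have primA : p.-primitive_root (xi%:A : K).
    by rewrite (fmorph_primitive_root (in_alg K)).
  have [i ci] := prim_rootP primA cp.
  have sc : sigma c = c.
    by rewrite ci -(rmorphXn (in_alg K)) /= rmorph_alg.
  have e : d' = c * d by rewrite /c divfK.
  have sd'd : sigma d' = d'.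
    rewrite [in LHS]e rmorphM; change (sigma c * sigma d = d').
    by rewrite sc sd expr0 scale1r mul1r -e.
  by apply: (mulfI d'0); rewrite -sd' sd'd mulr1.
have Nk : normKF k = 1 by rewrite normE; exact: Pp1.
have gen : generator 'Gal({:K} / 1)%g sigma by rewrite /generator galG.
have /(Hilbert's_theorem_90 gen (memvf k)) [b [_ b0] kb] :
  galNorm 1 {:K} k == 1 by change (normKF k == 1); rewrite Nk.
pose f' := gamma * b ^+ p.
have sf : sigma f' = f'.
  rewrite rmorphM rmorphXn; change (sigma gamma * sigma b ^+ p = f').
  by rewrite sg kb -mulrA -exprMn divfK ?fmorph_eq0.
have f'K : f' \in fixedField G.
  apply/fixedFieldP; first exact: memvf.
  move=> x /cycleP [i ->]; elim: i => [|i IH]; first by rewrite expg0 gal_id.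
  by rewrite sX IH sf.
rewrite K0_1 in f'K; case/vlineP: f'K => f ef.
have f'0 : f' != 0 by rewrite mulf_neq0 // expf_neq0.
exists f; split.
  by apply: contraNneq f'0 => f0; rewrite ef f0 scale0r.
exists b^-1; split; first by rewrite invr_eq0.
by rewrite -ef /f' exprVn mulfK // expf_neq0.
Qed.
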